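(* There is an infinite family of instances (temporal graphs $\mathcal G_n$ with parameters $T_{\max},\delta$) such that the witness complexity under the infection-times-only variation grows in $\Omega(|E(\mathcal G_n)|)$, with the implied constant independent of $k$.
   Context: A temporal graph $\mathcal G=(V,E,\lambda)$ with lifetime $T_{\max}$ consists of a finite undirected static graph $(V,E)$ and a labeling $\lambda:E\to\{1,\dots,T_{\max}\}$; edge $e$ is present only at time $\lambda(e)$. Infection model with parameter $\delta$: a set $S\subseteq V\times[0,T_{\max}]$ of at most $k$ seed infections; a seed $(u,t)$ makes $u$ infected at time $t$; otherwise a susceptible node $u$ becomes infected at time $t$ iff some neighbour $v$ infectious at time $t$ has $\lambda(uv)=t$. A node infected at time $t$ is infectious at times $t+1,\dots,t+\delta$ and resistant afterwards. The infection timetable of a round is the set of pairs $(v,t)$ with $v$ infected at time $t$. Under the infection-times-only variation, a witnessing schedule of length $a$ is a sequence $S_1,\dots,S_a$ of seed sets of size at most $k$ such that all labels of $\mathcal G$ are uniquely determined (among labelings of the known static graph) by the infection timetables of these rounds; the witness complexity is the length of a shortest witnessing schedule. *)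

(* Defs.v *)
From mathcomp Require Import all_boot.
Set Implicit Arguments. Unset Strict Implicit. Unset Printing Implicit Defensive.

(* A temporal-graph instance: vertex set 'I_n, static graph given by an
   adjacency relation, lifetime T_max, labeling (read on edges only) and
   the infectious-period parameter delta. *)
Record instance := Instance {
  tg_n : nat;
  tg_adj : rel 'I_tg_n;
  tg_T : nat;
  tg_lab : 'I_tg_n -> 'I_tg_n -> nat;
  tg_delta : nat }.

Definition simple_graph n (adj : rel 'I_n) :=
  irreflexive adj /\ symmetric adj.

Arguments tg_adj : clear implicits.
Arguments tg_lab : clear implicits.

Definition valid_labeling n (adj : rel 'I_n) (T : nat) (lab : 'I_n -> 'I_n -> nat) :=
  forall u v, adj u v -> lab u v = lab v u /\ 1 <= lab u v <= T.

Definition num_edges n (adj : rel 'I_n) : nat :=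
  #|[set p : 'I_n * 'I_n | (p.1 < p.2) && adj p.1 p.2]|.

Section Infection.
Variables (n : nat) (adj : rel 'I_n) (lab : 'I_n -> 'I_n -> nat) (delta : nat)
          (seed : 'I_n -> nat -> bool).

(* f v = Some s : v was infected at time s *)
Definition infectious (f : 'I_n -> option nat) (v : 'I_n) (t : nat) : bool :=
  if f v is Some s then (s < t) && (t <= s + delta) else false.

Definition newly_infected (f : 'I_n -> option nat) (t : nat) (u : 'I_n) : bool :=
  (f u == None) &&
  (seed u t || [exists v, [&& adj u v, infectious f v t & lab u v == t]]).

Fixpoint inf_before (t : nat) : 'I_n -> option nat :=
  match t with
  | 0 => fun _ => None
  | t'.+1 => fun u =>
      let f := inf_before t' in
      if f u is Some s then Some s
      else if newly_infected f t' u then Some t' else None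
  end.
End Infection.

Definition seedset (G : instance) := {set 'I_(tg_n G) * 'I_(tg_T G).+1}.


Definition seedP (G : instance) (S : seedset G) (u : 'I_(tg_n G)) (t : nat) : bool :=
  [exists p in S, (p.1 == u) && (nat_of_ord p.2 == t)].

(* infection timetable of a round with seed set S under labeling lab:
   the map v |-> infection time of v (None if never infected); this
   encodes the set of pairs (v,t) with v infected at time t. *)
Definition timetable (G : instance) (lab : 'I_(tg_n G) -> 'I_(tg_n G) -> nat)
  (S : seedset G) : 'I_(tg_n G) -> option nat :=
  inf_before (tg_adj G) lab (tg_delta G) (@seedP G S) (tg_T G).+1.

Arguments timetable : clear implicits.

Definition witnessing (G : instance) (k : nat) (sched : seq (seedset G)) : Prop :=
  (forall S, S \in sched -> #|S| <= k) /\
  forall lab' : 'I_(tg_n G) -> 'I_(tg_n G) -> nat,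
    valid_labeling (tg_adj G) (tg_T G) lab' ->
    (forall S, S \in sched -> timetable G lab' S =1 timetable G (tg_lab G) S) ->
    forall u v, tg_adj G u v -> lab' u v = tg_lab G u v.

Arguments witnessing : clear implicits.

Definition instance_ok (G : instance) : Prop :=
  simple_graph (tg_adj G) /\ valid_labeling (tg_adj G) (tg_T G) (tg_lab G) /\
  0 < tg_delta G.

(* Main.v *)
Require Import Defs.
From mathcomp Require Import all_boot zify.
Set Implicit Arguments. Unset Strict Implicit. Unset Printing Implicit Defensive.

Section Gen.
Variables (n : nat) (adj : rel 'I_n) (lab : 'I_n -> 'I_n -> nat) (d : nat)
          (seed : 'I_n -> nat -> bool).
Local Notation F := (inf_before adj lab d seed).

Lemma inf_mono t t' u s : F t u = Some s -> t <= t' -> F t' u = Some s.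
Proof.
move=> H; elim: t' => [|t' IH]; first by rewrite leqn0 => /eqP E; subst t.
rewrite leq_eqVlt => /orP [/eqP E|h]; first by subst t.
by rewrite /= IH.
Qed.

Lemma inf_inv t u s : F t u = Some s -> F s u = None /\ newly_infected adj lab d seed (F s) s u.
Proof.
elim: t => [//|t IH] /=.
case E: (F t u) => [s2|]; first by move=> [hs]; apply: IH; rewrite E hs.
by case: ifP => // h [<-].
Qed.

Lemma newly_ext (f g : 'I_n -> option nat) t u : f =1 g ->
  newly_infected adj lab d seed f t u = newly_infected adj lab d seed g t u.
Proof.
move=> H; rewrite /newly_infected /infectious H; congr (_ && (_ || _)).
by apply: eq_existsb => v; rewrite H.
Qed.
End Gen.

Definition sadj n : rel 'I_n.+1 := fun u v => (val u == 0) != (val v == 0).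
Definition slab n (u v : 'I_n.+1) : nat := val u + val v.
Definition Gs n : instance := @Instance n.+1 (@sadj n) (n * n) (@slab n) 1.
Definition labp n (li : 'I_n.+1) (a' : nat) (u v : 'I_n.+1) : nat :=
  if ((val u == 0) && (v == li)) || ((u == li) && (val v == 0)) then a' else slab u v.

Lemma round_gen n (seed : 'I_n.+1 -> nat -> bool) (Tp : nat) (li : 'I_n.+1) a' :
  val li != 0 ->
  (forall s, inf_before (@sadj n) (@slab n) 1 seed Tp ord0 = Some s ->
     [/\ val li != s, val li != s.+1, a' != s & a' != s.+1]) ->
  (forall t, seed li t -> t.+1 != a') ->
  forall t, t <= Tp -> inf_before (@sadj n) (labp li a') 1 seed t =1
                       inf_before (@sadj n) (@slab n) 1 seed t.
Proof.
move=> li0 H1 H2; elim=> [|t IH] ht u //=.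
have IHt := IH (ltnW ht).
rewrite IHt; case E: (inf_before _ _ _ _ t u) => [s|] //.
rewrite (newly_ext _ _ _ _ t u IHt).
set F := inf_before (@sadj n) (@slab n) 1 seed in E H1 *.
suff -> : newly_infected (@sadj n) (labp li a') 1 seed (F t) t u =
          newly_infected (@sadj n) (@slab n) 1 seed (F t) t u by [].
rewrite /newly_infected E eqxx /=; congr (_ || _); apply: eq_existsb => v.
rewrite /labp; case: ifP => Hsp //.
have ord0E : forall w : 'I_n.+1, val w == 0 -> w = ord0.
  by move=> w /eqP hw; apply: val_inj.
case/orP: Hsp => /andP [u0 vli].
- move/eqP: vli => ->.
  have -> : slab u li = val li by rewrite /slab (eqP u0).
  case Hinf: (infectious 1 (F t) li t); rewrite ?andbF ?andbT ?andFb //.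
  suff [-> ->] : (a' == t) = false /\ (val li == t) = false by [].
  split; apply/negP => /eqP Ht.
  + move: Hinf; rewrite /infectious; case Es: (F t li) => [s|] // /andP [h1 h2].
    have ts : t = s.+1 by lia.
    have [Fs Hn] := inf_inv Es.
    move: Hn; rewrite /newly_infected Fs /= => /orP [hs|/existsP [w /and3P [aw iw _]]].
    * by move: (H2 _ hs); rewrite Ht ts eqxx.
    * have w0 : val w == 0 by move: aw; rewrite /sadj (negbTE li0) /=; case: (val w == 0).
      move: iw; rewrite /infectious; case Ew: (inf_before _ _ _ _ s w) => [x|] // _; rewrite -/F in Ew.
      have Fw : F t w = Some x by apply: inf_mono Ew _; lia.
      by move: Fw; rewrite (ord0E _ w0) -(ord0E _ u0) E.
  + have Hn : newly_infected (@sadj n) (@slab n) 1 seed (F t) t u.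
      rewrite /newly_infected E eqxx /=; apply/orP; right; apply/existsP; exists li.
      by rewrite /sadj u0 li0 Hinf /slab (eqP u0) Ht eqxx.
    have Ft1 : F t.+1 u = Some t by rewrite /= E Hn.
    have := inf_mono Ft1 ht; rewrite (ord0E _ u0) => /H1 [].
    by rewrite Ht eqxx.
- move/eqP: u0 => ->.
  have -> : slab li v = val li by rewrite /slab (eqP vli) addn0.
  rewrite (ord0E _ vli).
  case Hinf: (infectious 1 (F t) ord0 t); rewrite ?andbF ?andbT ?andFb //.
  move: Hinf; rewrite /infectious; case Es: (F t ord0) => [s|] // /andP [h1 h2].
  have ts : t = s.+1 by lia.
  have [_ _ h3 h4] := H1 _ (inf_mono Es (ltnW ht)).
  move: h4; rewrite -ts => /negbTE ->.
  by have [_ h5 _ _] := H1 _ (inf_mono Es (ltnW ht)); move: h5; rewrite -ts => /negbTE ->.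
Qed.

Lemma avoid (r s : seq nat) : uniq r -> size s < size r -> exists2 x, x \in r & x \notin s.
Proof.
move=> ur hs; case: (boolP (all (fun x => x \in s) r)) => [/allP sub|/allPn [x xr xs]].
  by have := uniq_leq_size ur sub; rewrite leqNgt hs.
by exists x.
Qed.

Lemma size_flat_le (T : eqType) (U : Type) (f : T -> seq U) (s : seq T) b :
  (forall x, x \in s -> size (f x) <= b) -> size (flatten (map f s)) <= size s * b.
Proof.
elim: s => //= x s IH H; rewrite size_cat mulSn leq_add ?H ?mem_head //.
by apply: IH => y hy; apply: H; rewrite inE hy orbT.
Qed.

Lemma num_edges_star n : num_edges (@sadj n) = n.
Proof.
rewrite /num_edges.
have -> : [set p : 'I_n.+1 * 'I_n.+1 | (p.1 < p.2) && sadj p.1 p.2] =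
          (fun i => (ord0, i)) @: [set~ (ord0 : 'I_n.+1)].
  apply/setP => [[x y]]; rewrite inE /=; apply/andP/imsetP.
  - move=> [xy]; rewrite /sadj => hs.
    have x0 : val x = 0.
      by move: hs xy; case: (val x =P 0) => // _; case: (val y =P 0) => // ->.
    have y0 : val y != 0 by move: hs; rewrite x0.
    exists y; first by rewrite !inE; apply/eqP => h; move: y0; rewrite h.
    by congr pair; apply: val_inj.
  - move=> [i]; rewrite !inE => hi [-> ->] /=.
    have : val i != 0 by apply/negP => /eqP h; move: hi; rewrite (_ : i = ord0) ?eqxx //; apply: val_inj.
    by rewrite /sadj /= lt0n => ->.
rewrite card_imset; last by move=> i j [].
by rewrite cardsC1 card_ord.
Qed.

Lemma Gs_ok n : instance_ok (Gs n).
Proof.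
split; [split|split] => //=.
- by move=> u; rewrite /sadj eqxx.
- by move=> u v; rewrite /sadj eq_sym.
- move=> [u hu] [v hv]; rewrite /sadj /slab /= => h; split; first by rewrite addnC.
  move: h; case: (u =P 0) => hu0; case: (v =P 0) => hv0 //= _; nia.
Qed.

Theorem mainTheorem18 :
  exists (G : nat -> instance) (c_num c_den : nat),
    0 < c_num /\ 0 < c_den /\
    (forall n, instance_ok (G n) /\ n <= num_edges (tg_adj (G n))) /\
    forall k : nat, exists N : nat, forall n : nat, N <= n ->
      forall sched : seq (seedset (G n)),
        witnessing (G n) k sched ->
        c_num * num_edges (tg_adj (G n)) <= c_den * size sched.
Proof.
exists Gs, 1, 3; split => //; split => //; split.
  by move=> n; split; [exact: Gs_ok | rewrite /= num_edges_star].
move=> k; exists k.+3 => n hn sched [hk hw].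
rewrite /= num_edges_star mul1n leqNgt; apply/negP => hlt.
set m := size sched in hlt.
set bad1 := flatten [seq (if timetable (Gs n) (@slab n) X ord0 is Some s then [:: s; s.+1] else [::]) | X : seedset (Gs n) <- sched].
have sb1 : size bad1 <= m * 2.
  apply: size_flat_le => X _; by case: (timetable _ _ _ _).
have hs1 : size bad1 < size (iota 1 n) by rewrite size_iota; lia.
have [i ir ib] := avoid (iota_uniq 1 n) hs1.
move: ir; rewrite mem_iota => /andP [i1 i2].
have iord : i < n.+1 by lia.
set li : 'I_n.+1 := inord i.
have liE : val li = i by apply: inordK.
set bad2 := i :: bad1 ++ flatten [seq [seq (val p.2).+1 | p <- enum X & p.1 == li] | X : seedset (Gs n) <- sched].
have sb2 : size bad2 <= (m * 2 + m * k).+1.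
  rewrite /= size_cat; apply: leq_add => //.
  apply: size_flat_le => X hX.
  rewrite size_map size_filter; apply: leq_trans (count_size _ _) _.
  by rewrite -cardE; apply: hk.
have h1 : m * k.+2 <= m * n.-1 by apply: leq_mul => //; lia.
have h2 : m * n.-1 <= n.-1 * n.-1 by apply: leq_mul => //; lia.
have hs2 : size bad2 < size (iota 1 (n * n)) by rewrite size_iota; nia.
have [a' ar ab] := avoid (iota_uniq 1 (n * n)) hs2.
move: ar; rewrite mem_iota => /andP [a1 a2].
have Hv : valid_labeling (tg_adj (Gs n)) (tg_T (Gs n)) (labp li a').
  move=> u v /= h; rewrite /labp.
  have [_ [hv _]] := Gs_ok n.
  have [e1 e2] := hv u v h; rewrite /= in e1 e2.
  split.
    rewrite e1; congr (if _ then _ else _).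
    case: (val u =P 0) => hu; case: (val v =P 0) => hv0; case: (u =P li) => hul; case: (v =P li) => hvl //=; subst; try lia.
  case: ifP => // _; lia.
have := hw (labp li a') Hv.
have H : forall X, X \in sched -> timetable (Gs n) (labp li a') X =1 timetable (Gs n) (tg_lab (Gs n)) X.
  move=> X hX u.
  apply: (@round_gen n (@seedP (Gs n) X) (n * n).+1 li a') => //.
  - by rewrite liE; lia.
  - move=> s hs.
    have mem1 : forall x, x \in [:: s; s.+1] -> x \in bad1.
      move=> x hx; apply/flatten_mapP; exists X => //.
      by rewrite /timetable /= in hs *; rewrite hs.
    have m1 := mem1 s (mem_head _ _).
    have m2 : s.+1 \in bad1 by apply: mem1; rewrite !inE eqxx orbT.
    rewrite liE; split; apply/negP => /eqP E.
    + by rewrite E m1 in ib.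
    + by rewrite E m2 in ib.
    + by move: ab; rewrite E !inE mem_cat m1 !orbT.
    + by move: ab; rewrite E !inE mem_cat m2 !orbT.
  - move=> t /existsP [p /andP [pS /andP [/eqP p1 /eqP p2]]].
    apply/negP => /eqP E; move: ab; rewrite !inE mem_cat; apply/negP; rewrite negbK.
    apply/orP; right; apply/orP; right; apply/flatten_mapP; exists X => //.
    apply/mapP; exists p; last by rewrite /= p2 E. 
    by rewrite mem_filter mem_enum pS p1 eqxx.
move=> /(_ H ord0 li).
have hadj : tg_adj (Gs n) ord0 li by rewrite /= /sadj liE /=; case: (i) i1.
rewrite /= /labp eqxx /= => /(_ hadj).
rewrite /slab liE /= => E; subst a'.
by move: ab; rewrite inE eqxx.
Qed.
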